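(* Let $\omega=[\mathbf a,\mathbf b]\subseteq[1,\infty)$ with $\mathbf a<\mathbf b$, and let $0<\delta<1$, $\Delta=(-\delta,\delta)$. Let $n\ge0$ and suppose the sequences $\mathbf a_k,\mathbf b_k,\mathbf c_k,\mathbf f_k,\mathbf d_k$ (described in the context) have been constructed for $0\le k\le n+1$ such that for every $0\le k\le n$: $0\notin\mathbf c_{k+1}$, $\mathbf a_{k+1}\cap\mathbf b_{k+1}=\emptyset$, $0\notin\mathbf f_{k+1}$, and, for every $0\le k\le n-1$, the interior of $\overline{\omega_{k+1}}$ is disjoint from $\Delta$. (These are exactly the checks passed whenever the iteration procedure reports step $n+1$.) Then $c_{n+1}(\mathbf a)\in\mathbf a_{n+1}$, $c_{n+1}(\mathbf b)\in\mathbf b_{n+1}$, $c'_{n+1}(\omega)\subseteq\mathbf c_{n+1}$, $(f^{n+1})'(\omega)\subseteq \mathbf f_{n+1}$, $\big(c'_{n+1}/(f^{n+1})'\big)(\omega)\subseteq\mathbf d_{n+1}$, and $\underline{\omega_{n+1}}\subseteq\omega_{n+1}\subseteq\overline{\omega_{n+1}}$.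
   Context: For a real parameter $a$ let $f_a(x)=a-x^2$. Define $c_0(a)=a$ and $c_{k+1}(a)=f_a(c_k(a))$ for $k\ge0$. For a parameter interval $\omega$ let $\omega_k:=\{c_k(a):a\in\omega\}$. Here $c_k'(a)$ denotes the derivative of $a\mapsto c_k(a)$ with respect to $a$, and $(f_a^k)'(c_0(a))$ the $x$-derivative of $f_a^k$ at $x=c_0(a)$ (with $f_a^0=\mathrm{id}$). Write $c_k'(\omega)=\{c_k'(a):a\in\omega\}$, $(f^k)'(\omega)=\{(f_a^k)'(c_0(a)):a\in\omega\}$, $\big(c_k'/(f^k)'\big)(\omega)=\{c_k'(a)/(f_a^k)'(c_0(a)):a\in\omega\}$. An interval $[x^-,x^+]$ has definite sign if $0\notin[x^-,x^+]$. For intervals $x,y$ let $g^-(x,y)=\min\{-2uv:u\in x,v\in y\}$, $g^+(x,y)=\max\{-2uv:u\in x,v\in y\}$. Construction. Real numbers $\mathbf a_k^\pm,\mathbf b_k^\pm,\mathbf c_k^\pm,\mathbf f_k^\pm,\mathbf d_k^\pm$ define intervals $\mathbf a_k=[\mathbf a_k^-,\mathbf a_k^+]$, etc. Let $\overline{\omega_k}$ be the convex hull of $\mathbf a_k\cup\mathbf b_k$; if $\mathbf a_k\cap\mathbf b_k=\emptyset$, let $\underline{\omega_k}$ be $[\mathbf a_k^+,\mathbf b_k^-]$ if $\mathbf a_k^+<\mathbf b_k^-$ and $[\mathbf b_k^+,\mathbf a_k^-]$ otherwise. Initially $\mathbf a_0^\pm=\mathbf a$, $\mathbf b_0^\pm=\mathbf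 b$, $\mathbf c_0^\pm=\mathbf f_0^\pm=\mathbf d_0^\pm=1$. Given step $k$ with $0\notin\overline{\omega_k}$, step $k+1$ consists of any real numbers satisfying: if $\mathbf a_k^+<0$, $\mathbf a_{k+1}^-\le f_{\mathbf a}(\mathbf a_k^-)$, $\mathbf a_{k+1}^+\ge f_{\mathbf a}(\mathbf a_k^+)$, $\mathbf b_{k+1}^-\le f_{\mathbf b}(\mathbf b_k^-)$, $\mathbf b_{k+1}^+\ge f_{\mathbf b}(\mathbf b_k^+)$; otherwise $\mathbf a_{k+1}^-\le f_{\mathbf a}(\mathbf a_k^+)$, $\mathbf a_{k+1}^+\ge f_{\mathbf a}(\mathbf a_k^-)$, $\mathbf b_{k+1}^-\le f_{\mathbf b}(\mathbf b_k^+)$, $\mathbf b_{k+1}^+\ge f_{\mathbf b}(\mathbf b_k^-)$; $\mathbf c_{k+1}^-\le 1+g^-(\mathbf c_k,\overline{\omega_k})$, $\mathbf c_{k+1}^+\ge 1+g^+(\mathbf c_k,\overline{\omega_k})$; $\mathbf f_{k+1}^-\le g^-(\mathbf f_k,\overline{\omega_k})$, $\mathbf f_{k+1}^+\ge g^+(\mathbf f_k,\overline{\omega_k})$; and, when $\mathbf f_{k+1}$ has definite sign, $\mathbf d_{k+1}^-\le \mathbf d_k^-+1/\mathbf f_{k+1}^+$, $\mathbf d_{k+1}^+\ge\mathbf d_k^++1/\mathbf f_{k+1}^-$. *)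

(* Defs.v *)
From Stdlib Require Import Reals Lra.
From Coquelicot Require Import Coquelicot.
Open Scope R_scope.

Definition fpar (a x : R) : R := a - x ^ 2.

Fixpoint cc (k : nat) (a : R) : R :=
  match k with O => a | S k => fpar a (cc k a) end.

Definition fiter (k : nat) (a x : R) : R := Nat.iter k (fpar a) x.

Definition dc (k : nat) (a : R) : R := Derive (fun t => cc k t) a.

(* (f_a^k)'(c_0(a)): x-derivative of f_a^k at x = c_0(a) *)
Definition dfk (k : nat) (a : R) : R := Derive (fun x => fiter k a x) (cc 0 a).

Record bounds := {
  aL : nat -> R; aH : nat -> R;
  bL : nat -> R; bH : nat -> R;
  cL : nat -> R; cH : nat -> R;
  fL : nat -> R; fH : nat -> R;
  dL : nat -> R; dH : nat -> R }.

Definition definite_sign (lo hi : R) : Prop := ~ (lo <= 0 <= hi).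

(* g^-(x,y) = min{-2uv : u in [xl,xh], v in [yl,yh]}, g^+ the max;
   for a bilinear function the extrema over a box are attained at corners. *)
Definition gmin (xl xh yl yh : R) : R :=
  Rmin (Rmin (-2 * xl * yl) (-2 * xl * yh)) (Rmin (-2 * xh * yl) (-2 * xh * yh)).
Definition gmax (xl xh yl yh : R) : R :=
  Rmax (Rmax (-2 * xl * yl) (-2 * xl * yh)) (Rmax (-2 * xh * yl) (-2 * xh * yh)).

(* overline{omega_k}: convex hull of a_k U b_k *)
Definition hull_lo (D : bounds) (k : nat) : R := Rmin (aL D k) (bL D k).
Definition hull_hi (D : bounds) (k : nat) : R := Rmax (aH D k) (bH D k).

(* underline{omega_k} (used when a_k and b_k are disjoint) *)
Definition under_lo (D : bounds) (k : nat) : R :=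
  if Rlt_dec (aH D k) (bL D k) then aH D k else bH D k.
Definition under_hi (D : bounds) (k : nat) : R :=
  if Rlt_dec (aH D k) (bL D k) then bL D k else aL D k.

Definition intervals_disjoint (xl xh yl yh : R) : Prop :=
  ~ (exists x, xl <= x <= xh /\ yl <= x <= yh).

Definition init_ok (A B : R) (D : bounds) : Prop :=
  aL D 0 = A /\ aH D 0 = A /\ bL D 0 = B /\ bH D 0 = B /\
  cL D 0 = 1 /\ cH D 0 = 1 /\ fL D 0 = 1 /\ fH D 0 = 1 /\
  dL D 0 = 1 /\ dH D 0 = 1.

Definition step_ok (A B : R) (D : bounds) (k : nat) : Prop :=
  (aH D k < 0 ->
     aL D (S k) <= fpar A (aL D k) /\ aH D (S k) >= fpar A (aH D k) /\
     bL D (S k) <= fpar B (bL D k) /\ bH D (S k) >= fpar B (bH D k)) /\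
  (~ aH D k < 0 ->
     aL D (S k) <= fpar A (aH D k) /\ aH D (S k) >= fpar A (aL D k) /\
     bL D (S k) <= fpar B (bH D k) /\ bH D (S k) >= fpar B (bL D k)) /\
  cL D (S k) <= 1 + gmin (cL D k) (cH D k) (hull_lo D k) (hull_hi D k) /\
  cH D (S k) >= 1 + gmax (cL D k) (cH D k) (hull_lo D k) (hull_hi D k) /\
  fL D (S k) <= gmin (fL D k) (fH D k) (hull_lo D k) (hull_hi D k) /\
  fH D (S k) >= gmax (fL D k) (fH D k) (hull_lo D k) (hull_hi D k) /\
  (definite_sign (fL D (S k)) (fH D (S k)) ->
     dL D (S k) <= dL D k + 1 / fH D (S k) /\
     dH D (S k) >= dH D k + 1 / fL D (S k)).

Definition constructed (A B : R) (D : bounds) (n : nat) : Prop :=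
  init_ok A B D /\
  forall k : nat, (k <= n)%nat ->
    definite_sign (hull_lo D k) (hull_hi D k) /\ step_ok A B D k.

(* Main.v *)
Require Import Defs.
From Stdlib Require Import Reals Lra Psatz Lia.
From Coquelicot Require Import Coquelicot.
Open Scope R_scope.

Lemma cc_der k t : is_derive (fun t => cc k t) t (dc k t).
Proof.
  revert t; induction k as [|k IH]; intro t.
  - unfold dc. simpl. assert (H: is_derive (fun t:R => t) t 1) by (apply (is_derive_id t)).
    rewrite (is_derive_unique _ _ _ H). exact H.
  - assert (H: is_derive (fun t => cc (S k) t) t (1 - INR 2 * dc k t * cc k t ^ 1)).
    { simpl. unfold fpar.
      exact (is_derive_minus (fun t => t) (fun t => cc k t ^ 2) t 1 _ (is_derive_id t)
        (is_derive_pow (fun t => cc k t) 2 t _ (IH t))). }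
    replace (dc (S k) t) with (1 - INR 2 * dc k t * cc k t ^ 1). exact H.
    unfold dc; symmetry; apply is_derive_unique; exact H.
Qed.

Lemma dc_S k t : dc (S k) t = 1 - 2 * cc k t * dc k t.
Proof.
  assert (H: is_derive (fun t => cc (S k) t) t (1 - INR 2 * dc k t * cc k t ^ 1)).
  { simpl. unfold fpar.
      exact (is_derive_minus (fun t => t) (fun t => cc k t ^ 2) t 1 _ (is_derive_id t)
        (is_derive_pow (fun t => cc k t) 2 t _ (cc_der k t))). }
  transitivity (1 - INR 2 * dc k t * cc k t ^ 1).
  unfold dc at 1; apply is_derive_unique; exact H. simpl; ring.
Qed.

Lemma dc_0 t : dc 0 t = 1.
Proof. pose proof (cc_der 0 t). unfold dc. simpl. apply is_derive_unique. apply (is_derive_id t). Qed.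

Lemma fi_der k a x : is_derive (fun x => fiter k a x) x (Derive (fun x => fiter k a x) x).
Proof.
  revert x; induction k as [|k IH]; intro x.
  - assert (H: is_derive (fun x:R => fiter 0 a x) x 1) by (apply (is_derive_id x)).
    rewrite (is_derive_unique _ _ _ H). exact H.
  - assert (H: is_derive (fun x => fiter (S k) a x) x
      (0 - INR 2 * Derive (fun x => fiter k a x) x * fiter k a x ^ 1)).
    { unfold fiter; simpl. unfold fpar.
      exact (is_derive_minus (fun _ => a) (fun x => fiter k a x ^ 2) x 0 _ (is_derive_const a x)
        (is_derive_pow (fun x => fiter k a x) 2 x _ (IH x))). }
    replace (Derive (fun x => fiter (S k) a x) x) with
      (0 - INR 2 * Derive (fun x => fiter k a x) x * fiter k a x ^ 1). exact H.
    symmetry; apply is_derive_unique; exact H.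
Qed.

Lemma fi_S k a x : Derive (fun x => fiter (S k) a x) x
   = -2 * fiter k a x * Derive (fun x => fiter k a x) x.
Proof.
  assert (H: is_derive (fun x => fiter (S k) a x) x
      (0 - INR 2 * Derive (fun x => fiter k a x) x * fiter k a x ^ 1)).
  { unfold fiter; simpl. unfold fpar.
      exact (is_derive_minus (fun _ => a) (fun x => fiter k a x ^ 2) x 0 _ (is_derive_const a x)
        (is_derive_pow (fun x => fiter k a x) 2 x _ (fi_der k a x))). }
  transitivity (0 - INR 2 * Derive (fun x => fiter k a x) x * fiter k a x ^ 1).
  apply is_derive_unique; exact H. simpl; ring.
Qed.

Lemma fiter_cc k a : fiter k a a = cc k a.
Proof. induction k; [reflexivity|]. unfold fiter in *; simpl. rewrite IHk. reflexivity. Qed.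

Lemma dfk_S k a : dfk (S k) a = -2 * cc k a * dfk k a.
Proof. unfold dfk. simpl cc at 1 3. rewrite fi_S, fiter_cc. reflexivity. Qed.

Lemma dfk_0 a : dfk 0 a = 1.
Proof. unfold dfk. simpl. apply is_derive_unique. apply (is_derive_id a). Qed.

Lemma cc_cont k : continuity (fun t => cc k t).
Proof. intro t. apply continuity_pt_filterlim.
  apply (ex_derive_continuous (K:=R_AbsRing) (V:=R_NormedModule) (fun t => cc k t) t).
  eexists. apply cc_der. Qed.

Lemma lin_bound xl xh u v : xl <= u <= xh ->
  Rmin (-2*xl*v) (-2*xh*v) <= -2*u*v <= Rmax (-2*xl*v) (-2*xh*v).
Proof.
  intros Hu. destruct (Rle_or_lt 0 v).
  - split; [eapply Rle_trans; [apply Rmin_r|] | eapply Rle_trans; [|apply Rmax_l]]; nra.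
  - split; [eapply Rle_trans; [apply Rmin_l|] | eapply Rle_trans; [|apply Rmax_r]]; nra.
Qed.

Lemma g_bound xl xh yl yh u v : xl <= u <= xh -> yl <= v <= yh ->
  gmin xl xh yl yh <= -2*u*v <= gmax xl xh yl yh.
Proof.
  intros Hu Hv. unfold gmin, gmax.
  pose proof (lin_bound xl xh u v Hu) as H1.
  pose proof (lin_bound yl yh v xl Hv) as H2.
  pose proof (lin_bound yl yh v xh Hv) as H3.
  replace (-2*xl*v) with (-2*v*xl) in H1 by ring.
  replace (-2*xh*v) with (-2*v*xh) in H1 by ring.
  replace (-2*yl*xl) with (-2*xl*yl) in H2 by ring.
  replace (-2*yh*xl) with (-2*xl*yh) in H2 by ring.
  replace (-2*yl*xh) with (-2*xh*yl) in H3 by ring.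
  replace (-2*yh*xh) with (-2*xh*yh) in H3 by ring.
  replace (-2*v*xl) with (-2*xl*v) in H2 by ring.
  replace (-2*v*xh) with (-2*xh*v) in H3 by ring.
  replace (-2*v*xl) with (-2*xl*v) in H1 by ring.
  replace (-2*v*xh) with (-2*xh*v) in H1 by ring.
  revert H1 H2 H3.
  unfold Rmin, Rmax; repeat destruct Rle_dec; intros; lra.
Qed.

Lemma inv_bound lo hi F : lo <= F <= hi -> definite_sign lo hi ->
  1 / hi <= 1 / F <= 1 / lo.
Proof.
  unfold definite_sign; intros HF Hs.
  assert (Hc : 0 < lo \/ hi < 0) by lra.
  assert (0 < F * hi) by (destruct Hc; nra).
  assert (0 < F * lo) by (destruct Hc; nra).
  assert (F <> 0) by (intro; subst; lra).
  assert (hi <> 0) by (intro; subst; lra).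
  assert (lo <> 0) by (intro; subst; lra).
  split.
  - assert (E: 1/F - 1/hi = (hi - F) * / (F*hi)) by (field; auto).
    assert (0 < /(F*hi)) by (apply Rinv_0_lt_compat; auto). nra.
  - assert (E: 1/lo - 1/F = (F - lo) * / (F*lo)) by (field; auto).
    assert (0 < /(F*lo)) by (apply Rinv_0_lt_compat; auto). nra.
Qed.

Lemma mono k A B lo hi : A <= B ->
  (forall t, A <= t <= B -> lo <= dc k t <= hi) -> definite_sign lo hi ->
  forall t, A <= t <= B -> Rmin (cc k A) (cc k B) <= cc k t <= Rmax (cc k A) (cc k B).
Proof.
  intros HAB Hd Hs t Ht. unfold definite_sign in Hs.
  assert (M : forall a b, A <= a -> a <= b -> b <= B ->
    exists c, A <= c <= B /\ cc k b - cc k a = dc k c * (b - a)).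
  { intros a b Ha Hab Hb.
    destruct (MVT_gen (fun t => cc k t) a b (dc k)) as [c [Hc E]].
    - intros x _. apply cc_der.
    - intros x _. apply cc_cont.
    - rewrite Rmin_left, Rmax_right in Hc by lra.
      exists c; split; [lra|exact E]. }
  destruct (M A t) as [c1 [Hc1 E1]]; try lra.
  destruct (M t B) as [c2 [Hc2 E2]]; try lra.
  pose proof (Hd c1 Hc1); pose proof (Hd c2 Hc2).
  assert (Hc : 0 < lo \/ hi < 0) by lra.
  unfold Rmin, Rmax; repeat destruct Rle_dec; destruct Hc; nra.
Qed.

Definition Pk A B D k : Prop :=
  (aL D k <= cc k A <= aH D k) /\ (bL D k <= cc k B <= bH D k) /\
  forall t, A <= t <= B ->
    (cL D k <= dc k t <= cH D k) /\ (fL D k <= dfk k t <= fH D k) /\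
    (dL D k <= dc k t / dfk k t <= dH D k) /\
    (hull_lo D k <= cc k t <= hull_hi D k).

Lemma allP A B D n : A < B -> constructed A B D n ->
  (forall k : nat, (k <= n)%nat ->
     definite_sign (cL D (S k)) (cH D (S k)) /\
     intervals_disjoint (aL D (S k)) (aH D (S k)) (bL D (S k)) (bH D (S k)) /\
     definite_sign (fL D (S k)) (fH D (S k))) ->
  forall k, (k <= S n)%nat -> Pk A B D k.
Proof.
  intros HAB [Hi Hc] H2 k. induction k as [|k IH]; intros Hk.
  - unfold init_ok in Hi. destruct Hi as (?&?&?&?&?&?&?&?&?&?).
    unfold Pk, hull_lo, hull_hi. simpl cc.
    repeat match goal with E : _ = _ |- _ => rewrite E; clear E end.
    split; [lra|split; [lra|]]. intros t Ht.
    rewrite dc_0, dfk_0. rewrite Rmin_left, Rmax_right by lra.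
    repeat split; try lra; unfold Rdiv; rewrite Rinv_1; lra.
  - assert (Hkn : (k <= n)%nat) by lia.
    destruct (IH ltac:(lia)) as (Ha & Hb & Ht).
    destruct (Hc k Hkn) as [Hs Hst].
    destruct (H2 k Hkn) as (HcS & Hdis & HfS).
    destruct Hst as (St1 & St2 & Sc1 & Sc2 & Sf1 & Sf2 & Sd).
    destruct (Sd HfS) as [Sd1 Sd2].
    assert (Hab : (aL D (S k) <= cc (S k) A <= aH D (S k)) /\
                  (bL D (S k) <= cc (S k) B <= bH D (S k))).
    { simpl cc. unfold fpar in *. unfold definite_sign, hull_lo, hull_hi in Hs.
      pose proof (Rmin_l (aL D k) (bL D k)); pose proof (Rmin_r (aL D k) (bL D k)).
      pose proof (Rmax_l (aH D k) (bH D k)); pose proof (Rmax_r (aH D k) (bH D k)).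
      destruct (Rlt_dec (aH D k) 0) as [Hn|Hn].
      - destruct (St1 Hn) as (?&?&?&?).
        assert (Rmax (aH D k) (bH D k) < 0) by lra.
        split; split; nra.
      - destruct (St2 Hn) as (?&?&?&?).
        assert (0 < Rmin (aL D k) (bL D k)) by lra.
        split; split; nra. }
    assert (Hder : forall t, A <= t <= B ->
      (cL D (S k) <= dc (S k) t <= cH D (S k)) /\ (fL D (S k) <= dfk (S k) t <= fH D (S k)) /\
      (dL D (S k) <= dc (S k) t / dfk (S k) t <= dH D (S k))).
    { intros t Htt. destruct (Ht t Htt) as (Hdc & Hdf & Hdd & Hh).
      pose proof (g_bound _ _ _ _ _ _ Hdc Hh) as G1.
      pose proof (g_bound _ _ _ _ _ _ Hdf Hh) as G2.
      rewrite dc_S, dfk_S.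
      assert (HF : fL D (S k) <= -2 * cc k t * dfk k t <= fH D (S k)) by lra.
      split; [lra|split; [exact HF|]].
      pose proof (inv_bound _ _ _ HF HfS) as HI.
      unfold definite_sign in HfS.
      assert (Hnz : -2 * cc k t * dfk k t <> 0) by (intro E; rewrite E in HF; lra).
      assert (cc k t <> 0) by (intro E; rewrite E in Hnz; apply Hnz; ring).
      assert (dfk k t <> 0) by (intro E; rewrite E in Hnz; apply Hnz; ring).
      replace ((1 - 2 * cc k t * dc k t) / (-2 * cc k t * dfk k t)) with
        (dc k t / dfk k t + 1 / (-2 * cc k t * dfk k t)) by (field; auto).
      lra. }
    split; [exact (proj1 Hab)|split; [exact (proj2 Hab)|]].
    intros t Htt. destruct (Hder t Htt) as (D1 & D2 & D3).
    split; [exact D1|split; [exact D2|split; [exact D3|]]].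
    assert (HM := mono (S k) A B (cL D (S k)) (cH D (S k)) ltac:(lra)
       (fun t h => proj1 (Hder t h)) HcS t Htt).
    destruct Hab as [Ha' Hb']. unfold hull_lo, hull_hi.
    revert HM. unfold Rmin, Rmax. repeat destruct Rle_dec; intros; lra.
Qed.
Theorem corollary6p1 (A B delta : R) (n : nat) (D : bounds) :
  1 <= A -> A < B -> 0 < delta < 1 ->
  constructed A B D n ->
  (forall k : nat, (k <= n)%nat ->
     definite_sign (cL D (S k)) (cH D (S k)) /\
     intervals_disjoint (aL D (S k)) (aH D (S k)) (bL D (S k)) (bH D (S k)) /\
     definite_sign (fL D (S k)) (fH D (S k))) ->
  (forall k : nat, (k < n)%nat ->
     forall x : R, hull_lo D (S k) < x < hull_hi D (S k) -> ~ (- delta < x < delta)) ->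
  (aL D (S n) <= cc (S n) A <= aH D (S n)) /\
  (bL D (S n) <= cc (S n) B <= bH D (S n)) /\
  (forall t : R, A <= t <= B -> cL D (S n) <= dc (S n) t <= cH D (S n)) /\
  (forall t : R, A <= t <= B -> fL D (S n) <= dfk (S n) t <= fH D (S n)) /\
  (forall t : R, A <= t <= B ->
     dL D (S n) <= dc (S n) t / dfk (S n) t <= dH D (S n)) /\
  (forall y : R, under_lo D (S n) <= y <= under_hi D (S n) ->
     exists t : R, A <= t <= B /\ cc (S n) t = y) /\
  (forall t : R, A <= t <= B ->
     hull_lo D (S n) <= cc (S n) t <= hull_hi D (S n)).
Proof.
  intros H1 HAB Hd Hc H2 H3.
  destruct (allP A B D n HAB Hc H2 (S n) (le_n _)) as (Ha & Hb & Ht).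
  split; [exact Ha|split; [exact Hb|]].
  split; [intros t h; apply (Ht t h)|].
  split; [intros t h; apply (Ht t h)|].
  split; [intros t h; apply (Ht t h)|].
  split; [|intros t h; apply (Ht t h)].
  intros y Hy. destruct (H2 n (le_n _)) as (_ & Hdis & _).
  assert (IV : Rmin (cc (S n) A) (cc (S n) B) <= y <= Rmax (cc (S n) A) (cc (S n) B)).
  { unfold under_lo, under_hi in Hy. destruct (Rlt_dec (aH D (S n)) (bL D (S n))).
    - unfold Rmin, Rmax; repeat destruct Rle_dec; lra.
    - assert (bH D (S n) < aL D (S n)).
      { destruct (Rlt_or_le (bH D (S n)) (aL D (S n))) as [h|h]; [exact h|].
        exfalso. apply Hdis. exists (Rmax (aL D (S n)) (bL D (S n))).
        unfold Rmax; destruct Rle_dec; lra. }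
      unfold Rmin, Rmax; repeat destruct Rle_dec; lra. }
  destruct (IVT_gen (fun t => cc (S n) t) A B y (cc_cont (S n)) IV) as [x [Hx E]].
  exists x. rewrite Rmin_left, Rmax_right in Hx by lra. split; [exact Hx|exact E].
Qed.
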